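(* Let $q$ be a prime power, $\xi$ a generator of $\mathbb{F}_q^*$, and let $u=(\xi^a,\xi^b,\xi^c)$ and $v=(\xi^d,\xi^e,\xi^f)$ be elements of $\mathcal{D}_q$ (exponents in $\mathbb{Z}_{q-1}$). Let $M=\{\xi^{a-d},\xi^{b-e},\xi^{c-f}\}\subseteq\mathbb{F}_q^*$ (as a set, so repeated values are counted once). Then \[\rho_q(u,v)=\sum_{\mu\in M}|\widetilde{B}(u)\cap\widetilde{B}(\mu v)|.\]
   Context: $\mathbb{F}_q$ is the finite field with $q$ elements. Hamming distance $d(u,v)=|\{i:u_i\ne v_i\}|$ on $\mathbb{F}_q^3$; $B(u)=\{v:d(u,v)\le1\}$; $E(u)=\bigcup_{\lambda\in\mathbb{F}_q}B(\lambda u)$. $\mathcal{D}_q=\{(u_1,u_2,u_3)\in\mathbb{F}_q^3: u_1,u_2,u_3 \text{ pairwise distinct and nonzero}\}$, $\widetilde{B}(u)=B(u)\cap\mathcal{D}_q$, $\widetilde{E}(u)=E(u)\cap\mathcal{D}_q$. For $u,v\in\mathbb{F}_q^3$, $\rho_q(u,v)=0$ if $|\widetilde{E}(u)|=0$ or $|\widetilde{E}(v)|=0$, and otherwise $\rho_q(u,v)=\sum_{\mu\in\mathbb{F}_q^*}|\widetilde{B}(u)\cap\widetilde{B}(\mu v)|$. *)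

(* Defs.v *)
From mathcomp Require Import all_boot all_order all_algebra.
Set Implicit Arguments. Unset Strict Implicit. Unset Printing Implicit Defensive.
Import GRing.Theory.
Local Open Scope ring_scope.

Section Defs.
Variable F : finFieldType.

Definition vec3 := {ffun 'I_3 -> F}.

Definition mk3 (x y z : F) : vec3 := [ffun i : 'I_3 => nth 0 [:: x; y; z] i].

Definition hamming (u v : vec3) : nat := #|[set i : 'I_3 | u i != v i]|.

Definition ball (u : vec3) : {set vec3} := [set w | (hamming u w <= 1)%N].

Definition scale3 (l : F) (u : vec3) : vec3 := [ffun i => l * u i].

Definition Eset (u : vec3) : {set vec3} := \bigcup_(l : F) ball (scale3 l u).

Definition Dq : {set vec3} :=
  [set w : vec3 | [forall i, w i != 0] &&
                  [forall i, forall j, (i != j) ==> (w i != w j)]].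

Definition Bt (u : vec3) : {set vec3} := ball u :&: Dq.
Definition Et (u : vec3) : {set vec3} := Eset u :&: Dq.

Definition rho (u v : vec3) : nat :=
  if (#|Et u| == 0%N) || (#|Et v| == 0%N) then 0%N
  else (\sum_(mu in [set x : F | x != 0%R]) #|Bt u :&: Bt (scale3 mu v)|)%N.

End Defs.

(* Main.v *)
Require Import Defs.
From mathcomp Require Import all_boot all_order all_algebra.
Import GRing.Theory.
Local Open Scope ring_scope.

Lemma key (F : finFieldType) (u v : vec3 F) (mu : F) :
  (forall i, u i != mu * v i) -> Bt u :&: Bt (scale3 mu v) = set0.
Proof.
move=> Hn; apply/setP=> w; rewrite !inE; apply/negP.
move=> /and3P [/and3P [H1 _ _] H2 _]; rewrite /hamming in H1 H2.
have sub : [set: 'I_3] \subset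
   [set i | u i != w i] :|: [set i | scale3 mu v i != w i].
  apply/subsetP=> i _; rewrite !inE ffunE.
  case: (eqVneq (u i) (w i)) => //= <-.
  by rewrite eq_sym; exact: Hn i.
have := subset_leq_card sub; rewrite cardsT card_ord.
move=> h3; have := leq_trans h3 (leq_card_setU _ _).
by move=> h; have := leq_trans h (leq_add H1 H2).
Qed.

Theorem lemma13 (F : finFieldType) (xi : F)
  (hxi : forall x : F, x != 0 -> exists k : nat, x = xi ^+ k)
  (a b c d e f : nat) :
  mk3 (xi ^+ a) (xi ^+ b) (xi ^+ c) \in Dq F ->
  mk3 (xi ^+ d) (xi ^+ e) (xi ^+ f) \in Dq F ->
  rho (mk3 (xi ^+ a) (xi ^+ b) (xi ^+ c)) (mk3 (xi ^+ d) (xi ^+ e) (xi ^+ f)) =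
  (\sum_(mu in [set (xi ^ (a%:Z - d%:Z))%R; (xi ^ (b%:Z - e%:Z))%R; (xi ^ (c%:Z - f%:Z))%R])
     #|Bt (mk3 (xi ^+ a) (xi ^+ b) (xi ^+ c)) :&:
       Bt (scale3 mu (mk3 (xi ^+ d) (xi ^+ e) (xi ^+ f)))|)%N.
Proof.
set u := mk3 _ _ _; set v := mk3 _ _ _; set M := [set _; _; _].
move=> uD vD.
have inEt : forall w, w \in Dq F -> #|Et w| != 0%N.
  move=> w wD; apply/eqP=> /cards0_eq /setP /(_ w); rewrite in_set0 in_setI wD andbT.
  move=> /negbT/negP; apply; apply/bigcupP; exists 1 => //.
  rewrite !inE /hamming.
  have -> : scale3 1 w = w by apply/ffunP=> i; rewrite ffunE mul1r.
  by apply: leq_trans (leq0n _); rewrite leqn0 cards_eq0; apply/eqP/setP=> i; rewrite !inE eqxx.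
rewrite /rho (negbTE (inEt _ uD)) (negbTE (inEt _ vD)) /=.
move: (uD) (vD); rewrite !inE => /andP [/forallP u0 _] /andP [/forallP v0 _].
have xi0 : xi != 0.
  apply/negP=> /eqP x0; move: uD; rewrite inE => /andP [_ /forallP Hd].
  have := Hd ord0; move=> /forallP Hd0.
  have := Hd0 (lift ord0 ord0); have := Hd0 (lift ord0 (lift ord0 ord0)).
  have := Hd (lift ord0 ord0) => /forallP Hd1.
  have := Hd1 (lift ord0 (lift ord0 ord0)).
  have := u0 ord0; have := u0 (lift ord0 ord0); have := u0 (lift ord0 (lift ord0 ord0)).
  rewrite /u !ffunE /= x0.
  rewrite !expr0n.
  by case: (c == 0%N); case: (b == 0%N); case: (a == 0%N); rewrite ?eqxx.
have MS : M \subset [set x : F | x != 0].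
  apply/subsetP=> x; rewrite !inE => /orP [/orP [] | ] /eqP ->;
  by rewrite expfz_neq0.
rewrite (big_setID M) /= (setIidPr MS) [X in (_ + X)%N]big1 ?addn0 //.
move=> mu; rewrite !inE => /andP [muM mu0].
apply/eqP; rewrite cards_eq0; apply/eqP/key=> i.
apply: contra muM => /eqP Hi.
have vi0 := v0 i.
have -> : mu = u i / v i by rewrite Hi mulfK.
have pw : forall m n : nat, xi ^ (m%:Z - n%:Z) = xi ^+ m / xi ^+ n.
  by move=> m n; rewrite expfzDr // -exprnN.
rewrite !pw /u /v !ffunE.
by clear Hi vi0; case: i => [[|[|[|]]]] //= _; rewrite eqxx ?orbT.
Qed.
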